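(* The variety $\mathcal V$ is arithmetical (i.e. congruence permutable and congruence distributive) and regular.
   Context: $\mathcal V$ is the variety of algebras $(L,\vee,\wedge,{}',0,1)$ that are bounded lattices with a complementation $'$ (i.e. $x\vee x'\approx1$, $x\wedge x'\approx0$) satisfying the identities $x\vee y'\approx y'\vee\big((x\vee y')\wedge y\big)$ and $x\wedge y\approx x\wedge\big((x\wedge y)\vee x'\big)$. An algebra is congruence permutable if $\Theta\circ\Phi=\Phi\circ\Theta$ for all congruences $\Theta,\Phi$; congruence distributive if its congruence lattice is distributive; regular if any two congruences having a common class coincide. A variety has such a property if all its members do. *)

(* Defs.v *)
Record V_algebra (T : Type) (join meet : T -> T -> T) (comp : T -> T) (zero one : T) : Prop := {
  join_assoc : forall x y z, join x (join y z) = join (join x y) z;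
  meet_assoc : forall x y z, meet x (meet y z) = meet (meet x y) z;
  join_comm : forall x y, join x y = join y x;
  meet_comm : forall x y, meet x y = meet y x;
  join_absorb : forall x y, join x (meet x y) = x;
  meet_absorb : forall x y, meet x (join x y) = x;
  join_zero : forall x, join x zero = x;
  meet_one : forall x, meet x one = x;
  comp_join : forall x, join x (comp x) = one;
  comp_meet : forall x, meet x (comp x) = zero;
  ident1 : forall x y, join x (comp y) = join (comp y) (meet (join x (comp y)) y);
  ident2 : forall x y, meet x y = meet x (join (meet x y) (comp x))
}.

Definition is_congruence {T : Type} (join meet : T -> T -> T) (comp : T -> T)
  (R : T -> T -> Prop) : Prop :=
  (forall x, R x x) /\
  (forall x y, R x y -> R y x) /\
  (forall x y z, R x y -> R y z -> R x z) /\
  (forall x1 y1 x2 y2, R x1 y1 -> R x2 y2 -> R (join x1 x2) (join y1 y2)) /\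
  (forall x1 y1 x2 y2, R x1 y1 -> R x2 y2 -> R (meet x1 x2) (meet y1 y2)) /\
  (forall x y, R x y -> R (comp x) (comp y)).

Definition rel_comp {T : Type} (R S : T -> T -> Prop) : T -> T -> Prop :=
  fun x z => exists y, R x y /\ S y z.

Definition rel_eq {T : Type} (R S : T -> T -> Prop) : Prop :=
  forall x y, R x y <-> S x y.

Definition cong_meet {T : Type} (R S : T -> T -> Prop) : T -> T -> Prop :=
  fun x y => R x y /\ S x y.

Definition cong_join {T : Type} (join meet : T -> T -> T) (comp : T -> T)
  (R S : T -> T -> Prop) : T -> T -> Prop :=
  fun x y => forall Q, is_congruence join meet comp Q ->
    (forall a b, R a b -> Q a b) -> (forall a b, S a b -> Q a b) -> Q x y.

Definition congruence_permutable {T : Type} (join meet : T -> T -> T) (comp : T -> T) : Prop :=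
  forall R S, is_congruence join meet comp R -> is_congruence join meet comp S ->
    rel_eq (rel_comp R S) (rel_comp S R).

Definition congruence_distributive {T : Type} (join meet : T -> T -> T) (comp : T -> T) : Prop :=
  forall R S U, is_congruence join meet comp R -> is_congruence join meet comp S ->
    is_congruence join meet comp U ->
    rel_eq (cong_meet R (cong_join join meet comp S U))
           (cong_join join meet comp (cong_meet R S) (cong_meet R U)).

(* regular: two congruences having a common class coincide. *)
Definition congruence_regular {T : Type} (join meet : T -> T -> T) (comp : T -> T) : Prop :=
  forall R S, is_congruence join meet comp R -> is_congruence join meet comp S ->
    (exists x y, forall z, R x z <-> S y z) -> rel_eq R S.

(* Main.v *)
Require Import Defs.
From Stdlib Require Import Setoid.

Definition dd {T : Type} (join meet : T -> T -> T) (comp : T -> T) (x z : T) : T :=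
  join (meet x z) (comp (join x z)).

Definition pp {T : Type} (join meet : T -> T -> T) (comp : T -> T) (x y z : T) : T :=
  join (meet x (dd join meet comp y z)) (meet z (dd join meet comp x y)).

Definition med {T : Type} (join meet : T -> T -> T) (x w y : T) : T :=
  join (join (meet x w) (meet w y)) (meet y x).

Section S.
Context {T : Type} {join meet : T -> T -> T} {comp : T -> T} {zero one : T}.

Lemma jidem (HV : V_algebra T join meet comp zero one) x : join x x = x.
Proof.
  destruct HV as [ja ma jc mc jab mab jz mo cj cm i1 i2].
  pose proof (mab x x) as H1.
  pose proof (jab x (join x x)) as H2.
  rewrite H1 in H2. exact H2.
Qed.

Lemma midem (HV : V_algebra T join meet comp zero one) x : meet x x = x.
Proof.
  destruct HV as [ja ma jc mc jab mab jz mo cj cm i1 i2].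
  pose proof (jab x x) as H1.
  pose proof (mab x (meet x x)) as H2.
  rewrite H1 in H2. exact H2.
Qed.

Lemma comp_one (HV : V_algebra T join meet comp zero one) : comp one = zero.
Proof.
  destruct HV as [ja ma jc mc jab mab jz mo cj cm i1 i2].
  pose proof (cm one) as H. rewrite mc, mo in H. exact H.
Qed.

Lemma join_one (HV : V_algebra T join meet comp zero one) x : join x one = one.
Proof.
  destruct HV as [ja ma jc mc jab mab jz mo cj cm i1 i2].
  pose proof (jab one x) as H. rewrite mc, mo in H.
  rewrite jc. exact H.
Qed.

Lemma mm_join (HV : V_algebra T join meet comp zero one) x z :
  meet (meet x z) (join x z) = meet x z.
Proof.
  destruct HV as [ja ma jc mc jab mab jz mo cj cm i1 i2].
  rewrite <- ma. rewrite (jc x z). rewrite mab. reflexivity.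
Qed.

Lemma dlem (HV : V_algebra T join meet comp zero one) x z :
  meet x (dd join meet comp x z) = meet x z.
Proof.
  pose proof (mm_join HV x z) as Hm.
  destruct HV as [ja ma jc mc jab mab jz mo cj cm i1 i2].
  pose proof (i2 (join x z) (meet x z)) as H.
  rewrite (mc (join x z) (meet x z)), Hm in H.
  unfold dd.
  rewrite <- (mab x z) at 1.
  rewrite <- ma. rewrite <- H.
  rewrite ma. f_equal.
  pose proof (jab x x) as H1. pose proof (mab x (meet x x)) as H2.
  rewrite H1 in H2. exact H2.
Qed.

Lemma dcomm (HV : V_algebra T join meet comp zero one) x z :
  dd join meet comp x z = dd join meet comp z x.
Proof.
  destruct HV as [ja ma jc mc jab mab jz mo cj cm i1 i2].
  unfold dd. rewrite (mc x z), (jc x z). reflexivity.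
Qed.

Lemma drefl (HV : V_algebra T join meet comp zero one) x :
  dd join meet comp x x = one.
Proof.
  unfold dd. rewrite (midem HV), (jidem HV). destruct HV as [ja ma jc mc jab mab jz mo cj cm i1 i2]; auto.
Qed.

Lemma p1 (HV : V_algebra T join meet comp zero one) x z :
  pp join meet comp x x z = z.
Proof.
  unfold pp. rewrite (dlem HV), (drefl HV).
  destruct HV as [ja ma jc mc jab mab jz mo cj cm i1 i2].
  rewrite mo, jc, (mc x z), jab. reflexivity.
Qed.

Lemma p2 (HV : V_algebra T join meet comp zero one) x z :
  pp join meet comp x z z = x.
Proof.
  unfold pp. rewrite (drefl HV), (dcomm HV x z), (dlem HV).
  destruct HV as [ja ma jc mc jab mab jz mo cj cm i1 i2].
  rewrite mo, (mc z x), jab. reflexivity.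
Qed.

Lemma med1 (HV : V_algebra T join meet comp zero one) x y :
  med join meet x x y = x.
Proof.
  unfold med. rewrite (midem HV).
  destruct HV as [ja ma jc mc jab mab jz mo cj cm i1 i2].
  rewrite jab, (mc y x), jab. reflexivity.
Qed.

Lemma med2 (HV : V_algebra T join meet comp zero one) x y :
  med join meet x y y = y.
Proof.
  unfold med. rewrite (midem HV).
  destruct HV as [ja ma jc mc jab mab jz mo cj cm i1 i2].
  rewrite (jc (meet x y) y), (mc x y), jab, jab. reflexivity.
Qed.

Lemma med3 (HV : V_algebra T join meet comp zero one) x w :
  med join meet x w x = x.
Proof.
  unfold med. rewrite (midem HV).
  destruct HV as [ja ma jc mc jab mab jz mo cj cm i1 i2].
  rewrite (mc w x), (jidem (Build_V_algebra _ _ _ _ _ _ ja ma jc mc jab mab jz mo cj cm i1 i2)).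
  rewrite jc, jab. reflexivity.
Qed.

Lemma cong_d (R : T -> T -> Prop) : is_congruence join meet comp R ->
  forall a a' b b', R a a' -> R b b' -> R (dd join meet comp a b) (dd join meet comp a' b').
Proof.
  intros [Hr [Hs [Ht [Hj [Hm Hc]]]]] a a' b b' Ha Hb. unfold dd. auto.
Qed.

Lemma cong_p (R : T -> T -> Prop) : is_congruence join meet comp R ->
  forall a a' b b' c c', R a a' -> R b b' -> R c c' ->
  R (pp join meet comp a b c) (pp join meet comp a' b' c').
Proof.
  intros HR. pose proof (cong_d R HR) as Hd.
  destruct HR as [Hr [Hs [Ht [Hj [Hm Hc]]]]]. intros. unfold pp. auto.
Qed.

Lemma cong_med (R : T -> T -> Prop) : is_congruence join meet comp R ->
  forall a a' b b' c c', R a a' -> R b b' -> R c c' ->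
  R (med join meet a b c) (med join meet a' b' c').
Proof.
  intros [Hr [Hs [Ht [Hj [Hm Hc]]]]]. intros. unfold med. auto.
Qed.

Lemma perm1 (HV : V_algebra T join meet comp zero one) R S :
  is_congruence join meet comp R -> is_congruence join meet comp S ->
  forall x z, rel_comp R S x z -> rel_comp S R x z.
Proof.
  intros HR HS x z [y [Hxy Hyz]].
  exists (pp join meet comp x y z). split.
  - pose proof (cong_p S HS x x y y y z) as H. rewrite (p2 HV) in H.
    destruct HS as [Hr _]. auto.
  - pose proof (cong_p R HR x y y y z z) as H. rewrite (p1 HV) in H.
    destruct HR as [Hr _]. auto.
Qed.

Lemma one_reg (HV : V_algebra T join meet comp zero one) R :
  is_congruence join meet comp R ->
  forall a b, R a b <-> R (dd join meet comp a b) one.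
Proof.
  intros HR a b. split.
  - intros H. rewrite <- (drefl HV a). apply (cong_d R HR).
    + destruct HR as [Hr _]; auto.
    + destruct HR as [Hr [Hs _]]; auto.
  - intros H.
    pose proof (dlem HV (join a b) (meet a b)) as _.
    pose proof (mm_join HV a b) as Hm.
    pose proof HV as HV'.
    destruct HV' as [ja ma jc mc jab mab jz mo cj cm i1 i2].
    pose proof (i2 (join a b) (meet a b)) as Hi.
    rewrite (mc (join a b) (meet a b)), Hm in Hi.
    (* meet (join a b) (dd a b) = meet a b *)
    destruct HR as [Hr [Hs [Ht [Hj [Hm' Hc]]]]].
    assert (H1 : R (meet a b) (join a b)).
    { rewrite Hi. fold (dd join meet comp a b).
      rewrite <- (mo (join a b)) at 2. apply Hm'; auto. }
    assert (Ha : R a (meet a b)).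
    { rewrite <- (mab a b) at 1.
      assert (E : meet a (meet a b) = meet a b) by (rewrite ma, (midem HV); reflexivity).
      rewrite <- E at 1. apply Hm'; auto. }
    assert (Hb : R b (meet a b)).
    { rewrite <- (mab b a) at 1. rewrite (jc b a).
      assert (E : meet b (meet a b) = meet a b)
        by (rewrite (mc a b), ma, (midem HV); reflexivity).
      rewrite <- E at 1. apply Hm'; auto. }
    eauto.
Qed.


Lemma regL (HV : V_algebra T join meet comp zero one) R S :
  is_congruence join meet comp R -> is_congruence join meet comp S ->
  forall x, (forall z, R x z -> S x z) -> forall u, R u one -> S u one.
Proof.
  intros HR HS x Hx u Hu.
  pose proof (comp_one HV) as C1.
  pose proof (join_one HV) as J1.
  pose proof HV as HV'.
  destruct HV' as [ja ma jc mc jab mab jz mo cj cm i1 i2].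
  destruct HR as [Hr [Hs [Ht [Hj [Hm Hc]]]]].
  destruct HS as [Sr [Ss [St [Sj [Sm Sc]]]]].
  assert (Ha : S x (meet x u)).
  { apply Hx. rewrite <- (mo x) at 1. apply Hm; auto. }
  assert (Hb : S x (join x (comp u))).
  { apply Hx. rewrite <- (jz x) at 1. rewrite <- C1. apply Hj; auto. }
  assert (E1 : u = join u (meet x u)) by (rewrite (mc x u), jab; reflexivity).
  assert (E2 : join u (join x (comp u)) = one).
  { rewrite (jc u (join x (comp u))), <- ja, (jc (comp u) u), cj, J1. reflexivity. }
  rewrite E1. apply St with (join u x).
  - apply Sj; auto.
  - rewrite <- E2. apply Sj; auto.
Qed.

Lemma comp_cong (HV : V_algebra T join meet comp zero one) S U :
  is_congruence join meet comp S -> is_congruence join meet comp U ->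
  is_congruence join meet comp (rel_comp S U).
Proof.
  intros HS HU.
  pose proof (perm1 HV U S HU HS) as P.
  pose proof HS as HS'. pose proof HU as HU'.
  destruct HS' as [Sr [Ss [St [Sj [Sm Sc]]]]].
  destruct HU' as [Ur [Us [Ut [Uj [Um Uc]]]]].
  unfold rel_comp in *.
  repeat split.
  - intros x. exists x; auto.
  - intros x y [w [H1 H2]]. apply P. exists w; auto.
  - intros x y z [w [H1 H2]] [v [H3 H4]].
    destruct (P w v (ex_intro _ y (conj H2 H3))) as [t [H5 H6]].
    exists t; split; eauto.
  - intros x1 y1 x2 y2 [w [H1 H2]] [v [H3 H4]]. exists (join w v); auto.
  - intros x1 y1 x2 y2 [w [H1 H2]] [v [H3 H4]]. exists (meet w v); auto.
  - intros x y [w [H1 H2]]. exists (comp w); auto.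
Qed.

Lemma distr (HV : V_algebra T join meet comp zero one) R S U :
  is_congruence join meet comp R -> is_congruence join meet comp S ->
  is_congruence join meet comp U ->
  rel_eq (cong_meet R (cong_join join meet comp S U))
         (cong_join join meet comp (cong_meet R S) (cong_meet R U)).
Proof.
  intros HR HS HU x y. unfold cong_meet, cong_join. split.
  - intros [Hxy HJ].
    destruct (HJ _ (comp_cong HV S U HS HU)) as [w [H1 H2]].
    + intros a b H. exists b. split; auto. destruct HU as [Ur _]; auto.
    + intros a b H. exists a. split; auto. destruct HS as [Sr _]; auto.
    + intros Q HQ HQS HQU.
      set (t := med join meet x w y).
      pose proof HQ as [Qr [Qs [Qt _]]].
      pose proof HR as [Rr [Rs [Rt _]]].
      pose proof HS as [Sr _]. pose proof HU as [Ur _].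
      assert (Rxt : R x t).
      { unfold t. rewrite <- (med3 HV x w) at 1. apply (cong_med R HR); auto. }
      apply Qt with t.
      * apply HQS. split; auto.
        unfold t. rewrite <- (med1 HV x y) at 1. apply (cong_med S HS); auto.
      * apply HQU. split; eauto.
        unfold t. rewrite <- (med2 HV x y) at 2. apply (cong_med U HU); auto.
  - intros H. split.
    + apply H; auto. intros a b [? ?]; auto. intros a b [? ?]; auto.
    + intros Q HQ HQS HQU. apply H; auto.
      intros a b [? ?]; auto. intros a b [? ?]; auto.
Qed.

End S.

Theorem theorem2 :
  forall (T : Type) (join meet : T -> T -> T) (comp : T -> T) (zero one : T),
    V_algebra T join meet comp zero one ->
    (congruence_permutable join meet comp /\ congruence_distributive join meet comp) /\
    congruence_regular join meet comp.
Proof.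
  intros T join meet comp zero one HV. split; [split|].
  - intros R S HR HS x z. split; apply (perm1 HV); auto.
  - intros R S U HR HS HU. apply (distr HV); auto.
  - intros R S HR HS [x [y H]].
    pose proof HR as [Rr [Rs [Rt _]]].
    pose proof HS as [Sr [Ss [St _]]].
    assert (Syx : S y x) by (apply H; auto).
    assert (H1 : forall z, R x z -> S x z) by (intros z Hz; apply St with y; auto; apply H; auto).
    assert (H2 : forall z, S x z -> R x z) by (intros z Hz; apply H; eauto).
    intros a b. rewrite (one_reg HV R HR), (one_reg HV S HS). split.
    + apply (regL HV R S HR HS x H1).
    + apply (regL HV S R HS HR x H2).
Qed.
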